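(* For every $h\in\widehat{\operatorname{PC}^{\bowtie}}$ there exist order-preserving homeomorphisms $\phi,\psi$ of $[0,1[$ and elements $f,g\in\widehat{\operatorname{IET}^{\bowtie}}$ such that $h=\psi\circ f=g\circ\phi$.
   Context: $X=[0,1[$. $\widehat{\operatorname{PC}^{\bowtie}}$ is the group of bijections $X\to X$ continuous outside a finite subset of $X$. $\widehat{\operatorname{IET}^{\bowtie}}$ is the subgroup of bijections $f$ for which there is a finite partition of $X$ into intervals $[a,b[$ such that on each open interval $]a,b[$, $f$ is of the form $x\mapsto x+c$ or $x\mapsto -x+c$. *)

(* Defs.v *)
From Stdlib Require Import Reals List.
Open Scope R_scope.

Definition inX (x : R) : Prop := 0 <= x < 1.

(* Maps of X are represented by functions R -> R; only their values on X matter. *)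
Definition bijX (f : R -> R) : Prop :=
  (forall x, inX x -> inX (f x)) /\
  (forall x y, inX x -> inX y -> f x = f y -> x = y) /\
  (forall y, inX y -> exists x, inX x /\ f x = y).

Definition contX_at (f : R -> R) (x : R) : Prop :=
  forall eps, 0 < eps -> exists delta, 0 < delta /\
    forall y, inX y -> Rabs (y - x) < delta -> Rabs (f y - f x) < eps.

Definition PC_hat (f : R -> R) : Prop :=
  bijX f /\
  exists S : list R, (forall s, In s S -> inX s) /\
    forall x, inX x -> ~ In x S -> contX_at f x.

Definition IET_hat (f : R -> R) : Prop :=
  bijX f /\
  exists (n : nat) (a : nat -> R),
    a 0%nat = 0 /\ a n = 1 /\
    (forall i, (i < n)%nat -> a i < a (S i)) /\
    (forall i, (i < n)%nat -> exists c : R,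
       (forall x, a i < x < a (S i) -> f x = x + c) \/
       (forall x, a i < x < a (S i) -> f x = - x + c)).

Definition incr_homeoX (f : R -> R) : Prop :=
  bijX f /\
  (forall x y, inX x -> inX y -> x < y -> f x < f y) /\
  (forall x, inX x -> contX_at f x) /\
  exists g : R -> R,
    (forall x, inX x -> inX (g x) /\ g (f x) = x /\ f (g x) = x) /\
    (forall x, inX x -> contX_at g x).

(* Main.v *)
Require Import Defs.
From Stdlib Require Import Reals Lra Lia Psatz ClassicalEpsilon Classical List Arith.
Open Scope R_scope.

Lemma cont_of_ed f x0 :
  (forall eps, 0 < eps -> exists del, 0 < del /\
     forall x, Rabs (x - x0) < del -> Rabs (f x - f x0) < eps) ->
  continuity_pt f x0.
Proof.
  intros H eps Heps. destruct (H eps Heps) as [d [Hd Hx]].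
  exists d; split; [lra|]. intros x [_ Hx'].
  simpl in *. unfold R_dist in *. apply Hx; auto.
Qed.

Fixpoint sumf (f : nat -> R) (n : nat) : R :=
  match n with O => 0 | S m => sumf f m + f m end.

Lemma sumf_ext f g n : (forall k, (k < n)%nat -> f k = g k) -> sumf f n = sumf g n.
Proof.
  induction n; simpl; intros H; auto.
  rewrite IHn by (intros; apply H; lia). rewrite H by lia. auto.
Qed.

Lemma sumf_le f g n : (forall k, (k < n)%nat -> f k <= g k) -> sumf f n <= sumf g n.
Proof.
  induction n; simpl; intros H; [lra|].
  assert (sumf f n <= sumf g n) by (apply IHn; intros; apply H; lia).
  specialize (H n ltac:(lia)). lra.
Qed.

Lemma sumf_lt f g n j : (forall k, (k < n)%nat -> f k <= g k) -> (j < n)%nat -> f j < g j ->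
  sumf f n < sumf g n.
Proof.
  induction n; simpl; intros H Hj Hlt; [lia|].
  destruct (Nat.eq_dec j n).
  - subst. assert (sumf f n <= sumf g n) by (apply sumf_le; intros; apply H; lia). lra.
  - assert (sumf f n < sumf g n).
    { apply IHn; [intros; apply H; lia| lia | auto]. }
    specialize (H n ltac:(lia)). lra.
Qed.

Lemma sumf_diff f g n j : (forall k, (k < n)%nat -> k <> j -> f k = g k) -> (j < n)%nat ->
  sumf f n - sumf g n = f j - g j.
Proof.
  induction n; simpl; intros H Hj; [lia|].
  destruct (Nat.eq_dec j n).
  - subst. rewrite (sumf_ext f g n) by (intros; apply H; lia). lra.
  - rewrite <- (H n) by lia. assert (sumf f n - sumf g n = f j - g j).
    { apply IHn; [intros; apply H; lia| lia]. }
    lra.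
Qed.

Lemma sumf_single f n j : (forall k, (k < n)%nat -> k <> j -> f k = 0) -> (j < n)%nat ->
  sumf f n = f j.
Proof.
  intros H Hj. pose proof (sumf_diff f (fun _ => 0) n j H Hj).
  assert (sumf (fun _ => 0) n = 0) by (clear; induction n; simpl; lra). lra.
Qed.

Lemma sumf_plus f g n : sumf (fun k => f k + g k) n = sumf f n + sumf g n.
Proof. induction n; simpl; lra. Qed.

Lemma sumf_tele a n : sumf (fun k => a (S k) - a k) n = a n - a O.
Proof. induction n; simpl; [lra|]. rewrite IHn. lra. Qed.

Lemma sumf_cont (F : nat -> R -> R) n x0 :
  (forall k, (k < n)%nat -> continuity_pt (F k) x0) ->
  continuity_pt (fun x => sumf (fun k => F k x) n) x0.
Proof.
  induction n; simpl; intros H.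
  - apply continuity_pt_const. intros ? ?; auto.
  - apply (continuity_pt_plus (fun x => sumf (fun k => F k x) n) (F n)).
    + apply IHn; intros; apply H; lia.
    + apply H; lia.
Qed.

Lemma avoid (E : list R) : forall u v, u < v -> exists t, u < t < v /\ ~ In t E.
Proof.
  induction E as [|e E IH]; intros u v Huv.
  - exists ((u+v)/2). split; [lra| simpl; auto].
  - destruct (Rle_dec e ((u+v)/2)).
    + destruct (IH ((u+v)/2) v ltac:(lra)) as [t [Ht Hn]].
      exists t; split; [lra|]. simpl. intros [H|H]; [lra|auto].
    + destruct (IH u ((u+v)/2) ltac:(lra)) as [t [Ht Hn]].
      exists t; split; [lra|]. simpl. intros [H|H]; [lra|auto].
Qed.




Lemma mono_cont G lo hi :
  (forall x y, x <= y -> G x <= G y) ->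
  (forall x, G lo <= G x <= G hi) ->
  (forall z, G lo <= z <= G hi -> exists x, G x = z) ->
  forall x0, continuity_pt G x0.
Proof.
  intros Hm Hb Hs x0. apply cont_of_ed. intros eps Heps.
  set (y0 := G x0).
  assert (Hup : exists d2, 0 < d2 /\ forall x, x < x0 + d2 -> G x <= y0 + eps/2).
  { destruct (Rlt_dec y0 (G hi)).
    - destruct (Hs (Rmin (y0 + eps/2) (G hi))) as [x2 Hx2].
      { pose proof (Hb x0). unfold Rmin; destruct Rle_dec; unfold y0 in *; lra. }
      assert (x0 < x2).
      { destruct (Rlt_dec x0 x2); auto. exfalso.
        assert (G x2 <= G x0) by (apply Hm; lra).
        rewrite Hx2 in H. unfold y0 in *. unfold Rmin in H; destruct Rle_dec; lra. }
      exists (x2 - x0); split; [lra|]. intros x Hx.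
      assert (G x <= G x2) by (apply Hm; lra). rewrite Hx2 in H0.
      pose proof (Rmin_l (y0 + eps/2) (G hi)). lra.
    - exists 1; split; [lra|]. intros x _. pose proof (Hb x). lra. }
  assert (Hlo : exists d1, 0 < d1 /\ forall x, x0 - d1 < x -> y0 - eps/2 <= G x).
  { destruct (Rlt_dec (G lo) y0).
    - destruct (Hs (Rmax (y0 - eps/2) (G lo))) as [x1 Hx1].
      { pose proof (Hb x0). unfold Rmax; destruct Rle_dec; unfold y0 in *; lra. }
      assert (x1 < x0).
      { destruct (Rlt_dec x1 x0); auto. exfalso.
        assert (G x0 <= G x1) by (apply Hm; lra).
        rewrite Hx1 in H. unfold y0 in *. unfold Rmax in H; destruct Rle_dec; lra. }
      exists (x0 - x1); split; [lra|]. intros x Hx.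
      assert (G x1 <= G x) by (apply Hm; lra). rewrite Hx1 in H0.
      pose proof (Rmax_l (y0 - eps/2) (G lo)). lra.
    - exists 1; split; [lra|]. intros x _. pose proof (Hb x). lra. }
  destruct Hup as [d2 [Hd2 Hu]]. destruct Hlo as [d1 [Hd1 Hl]].
  exists (Rmin d1 d2). split. { apply Rmin_glb_lt; auto. }
  intros x Hx. pose proof (Rmin_l d1 d2). pose proof (Rmin_r d1 d2).
  apply Rabs_def2 in Hx. destruct Hx.
  specialize (Hu x ltac:(lra)). specialize (Hl x ltac:(lra)).
  apply Rabs_def1; fold y0; lra.
Qed.

Definition cm (u v p q : R) (r : R -> R) (s : bool) (x : R) : R :=
  if Rle_dec x u then 0 else if Rle_dec v x then q - p else
  if s then r x - p else q - r x.

Section CM.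
Variables (u v p q : R) (r : R -> R) (s : bool).
Hypothesis huv : u < v.
Hypothesis hpq : p < q.
Hypothesis hin : forall x, u < x < v -> p < r x < q.
Hypothesis hon : forall y, p < y < q -> exists x, u < x < v /\ r x = y.
Hypothesis hinc : s = true -> forall x y, u < x < v -> u < y < v -> x < y -> r x < r y.
Hypothesis hdec : s = false -> forall x y, u < x < v -> u < y < v -> x < y -> r y < r x.

Lemma cm_lo x : x <= u -> cm u v p q r s x = 0.
Proof. intros. unfold cm. destruct Rle_dec; [auto|lra]. Qed.
Lemma cm_hi x : v <= x -> cm u v p q r s x = q - p.
Proof. intros. unfold cm. destruct Rle_dec; [lra|]. destruct Rle_dec; [auto|lra]. Qed.
Lemma cm_mid x : u < x < v -> cm u v p q r s x = if s then r x - p else q - r x.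
Proof. intros. unfold cm. destruct Rle_dec; [lra|]. destruct Rle_dec; [lra|auto]. Qed.

Lemma cm_range x : 0 <= cm u v p q r s x <= q - p.
Proof.
  unfold cm. destruct Rle_dec; [lra|]. destruct Rle_dec; [lra|].
  specialize (hin x ltac:(lra)). destruct s; lra.
Qed.

Lemma cm_lt x y : x < y -> x < v -> u < y -> cm u v p q r s x < cm u v p q r s y.
Proof.
  intros Hxy Hxv Huy.
  destruct (Rle_dec x u).
  - rewrite cm_lo by auto. destruct (Rle_dec v y).
    + rewrite cm_hi by auto. lra.
    + rewrite cm_mid by lra. specialize (hin y ltac:(lra)). destruct s; lra.
  - rewrite (cm_mid x) by lra. destruct (Rle_dec v y).
    + rewrite cm_hi by auto. specialize (hin x ltac:(lra)). destruct s; lra.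
    + rewrite cm_mid by lra. destruct s.
      * specialize (hinc eq_refl x y ltac:(lra) ltac:(lra) Hxy). lra.
      * specialize (hdec eq_refl x y ltac:(lra) ltac:(lra) Hxy). lra.
Qed.

Lemma cm_le x y : x <= y -> cm u v p q r s x <= cm u v p q r s y.
Proof.
  intros Hxy. destruct (Req_dec x y). { subst; lra. }
  destruct (Rle_dec v x).
  - rewrite !cm_hi by lra. lra.
  - destruct (Rle_dec y u).
    + rewrite !cm_lo by lra. lra.
    + apply Rlt_le, cm_lt; lra.
Qed.

Lemma cm_cont x0 : continuity_pt (cm u v p q r s) x0.
Proof.
  apply (mono_cont _ u v).
  - apply cm_le.
  - intros x. rewrite (cm_lo u), (cm_hi v) by lra. apply cm_range.
  - rewrite (cm_lo u), (cm_hi v) by lra. intros z Hz.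
    destruct (Req_dec z 0). { exists u. rewrite cm_lo by lra. auto. }
    destruct (Req_dec z (q - p)). { exists v. rewrite cm_hi by lra. auto. }
    destruct (hon (if s then p + z else q - z)) as [x [Hx Hrx]].
    { destruct s; lra. }
    exists x. rewrite cm_mid by auto. destruct s; lra.
Qed.
End CM.


Lemma incr_cont f :
  (forall x, inX x -> inX (f x)) ->
  (forall x y, inX x -> inX y -> x < y -> f x < f y) ->
  (forall y, inX y -> exists x, inX x /\ f x = y) ->
  forall x, inX x -> contX_at f x.
Proof.
  intros Hi Hm Hs x Hx eps Heps. unfold inX in *.
  assert (Hrefl : forall a b, inX a -> inX b -> f a < f b -> a < b).
  { intros a b Ha Hb Hab. destruct (Rlt_dec a b); auto. exfalso.
    destruct (Req_dec a b). { subst; lra. }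
    assert (f b < f a) by (apply Hm; auto; lra). lra. }
  pose proof (Hi x Hx) as Hfx. unfold inX in Hfx.
  set (y2 := Rmin (f x + eps/2) ((f x + 1)/2)).
  assert (Hy2 : f x < y2 /\ y2 <= f x + eps/2 /\ inX y2).
  { unfold y2, Rmin; destruct Rle_dec; unfold inX; lra. }
  destruct (Hs y2 ltac:(tauto)) as [x2 [Hx2 Hfx2]].
  assert (x < x2) by (apply Hrefl; auto; lra).
  assert (Hlow : exists d1, 0 < d1 /\ forall z, inX z -> x - d1 < z -> f x - eps < f z).
  { destruct (Rlt_dec 0 (f x)).
    - set (y1 := Rmax (f x - eps/2) 0).
      assert (Hy1 : y1 < f x /\ f x - eps/2 <= y1 /\ inX y1).
      { unfold y1, Rmax; destruct Rle_dec; unfold inX; lra. }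
      destruct (Hs y1 ltac:(tauto)) as [x1 [Hx1 Hfx1]].
      assert (x1 < x) by (apply Hrefl; auto; lra).
      exists (x - x1); split; [lra|]. intros z Hz Hzl.
      assert (f x1 < f z) by (apply Hm; auto; lra). lra.
    - exists 1; split; [lra|]. intros z Hz _. pose proof (Hi z Hz). unfold inX in *. lra. }
  destruct Hlow as [d1 [Hd1 Hl]].
  exists (Rmin d1 (x2 - x)). split. { apply Rmin_glb_lt; lra. }
  intros z Hz Hd. pose proof (Rmin_l d1 (x2 - x)). pose proof (Rmin_r d1 (x2 - x)).
  apply Rabs_def2 in Hd. destruct Hd.
  specialize (Hl z Hz ltac:(lra)).
  assert (f z < f x2) by (apply Hm; auto; lra).
  apply Rabs_def1; lra.
Qed.

Lemma homeo_of_incr f :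
  (forall x, inX x -> inX (f x)) ->
  (forall x y, inX x -> inX y -> x < y -> f x < f y) ->
  (forall y, inX y -> exists x, inX x /\ f x = y) ->
  incr_homeoX f.
Proof.
  intros Hi Hm Hs.
  assert (Hinj : forall x y, inX x -> inX y -> f x = f y -> x = y).
  { intros x y Hx Hy E. destruct (Rtotal_order x y) as [H|[H|H]]; auto.
    - specialize (Hm x y Hx Hy H). lra.
    - specialize (Hm y x Hy Hx H). lra. }
  assert (Hg : forall y, exists x, inX y -> inX x /\ f x = y).
  { intros y. destruct (classic (inX y)) as [H|H].
    - destruct (Hs y H) as [x Hx]. exists x; auto.
    - exists 0. intros; contradiction. }
  set (g := fun y => proj1_sig (constructive_indefinite_description _ (Hg y))).
  assert (Hgp : forall y, inX y -> inX (g y) /\ f (g y) = y).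
  { intros y Hy. unfold g. destruct constructive_indefinite_description as [x Hx]. simpl. auto. }
  split; [split; [auto| split; auto]|]. split; [auto|]. split.
  { apply incr_cont; auto. }
  exists g. split.
  - intros x Hx. destruct (Hgp x Hx). split; auto. split; auto.
    destruct (Hgp (f x) (Hi x Hx)). apply Hinj; auto.
  - apply incr_cont.
    + intros; apply Hgp; auto.
    + intros x y Hx Hy Hxy. destruct (Hgp x Hx), (Hgp y Hy).
      destruct (Rtotal_order (g x) (g y)) as [H3|[H3|H3]]; auto.
      * rewrite <- H0, <- H2, H3 in Hxy. lra.
      * specialize (Hm _ _ H1 H H3). lra.
    + intros y Hy. exists (f y). split; [auto|]. destruct (Hgp (f y) (Hi y Hy)). apply Hinj; auto.
Qed.

Lemma incr_homeo_inv f : incr_homeoX f ->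
  exists g, incr_homeoX g /\ forall x, inX x -> inX (g x) /\ g (f x) = x /\ f (g x) = x.
Proof.
  intros [[Hi [Hinj Hs]] [Hm [_ [g [Hg _]]]]].
  exists g. split; auto. apply homeo_of_incr.
  - intros; apply Hg; auto.
  - intros x y Hx Hy Hxy. destruct (Hg x Hx) as [H1 [_ H2]], (Hg y Hy) as [H3 [_ H4]].
    destruct (Rtotal_order (g x) (g y)) as [H5|[H5|H5]]; auto.
    + rewrite <- H2, <- H4, H5 in Hxy. lra.
    + specialize (Hm _ _ H3 H1 H5). lra.
  - intros y Hy. exists (f y). split; [auto|]. apply Hg; auto.
Qed.

Lemma bij_comp f g : bijX f -> bijX g -> bijX (fun x => f (g x)).
Proof.
  intros [Hf1 [Hf2 Hf3]] [Hg1 [Hg2 Hg3]]. split; [|split].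
  - auto.
  - intros x y Hx Hy E. apply Hg2; auto.
  - intros y Hy. destruct (Hf3 y Hy) as [z [Hz E]]. destruct (Hg3 z Hz) as [x [Hx E2]].
    exists x. split; auto. congruence.
Qed.


Definition incseq (n : nat) (a : nat -> R) :=
  a 0%nat = 0 /\ a n = 1 /\ (forall i, (i < n)%nat -> a i < a (S i)).

Lemma inc_lt n a : (forall i, (i < n)%nat -> a i < a (S i)) ->
  forall i j, (i < j)%nat -> (j <= n)%nat -> a i < a j.
Proof.
  intros H i j Hij Hjn. induction j; [lia|].
  destruct (Nat.eq_dec i j).
  - subst. apply H; lia.
  - specialize (IHj ltac:(lia) ltac:(lia)). specialize (H j ltac:(lia)). lra.
Qed.

Lemma inc_le n a : (forall i, (i < n)%nat -> a i < a (S i)) ->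
  forall i j, (i <= j)%nat -> (j <= n)%nat -> a i <= a j.
Proof.
  intros H i j Hij Hjn. destruct (Nat.eq_dec i j). { subst; lra. }
  apply Rlt_le, (inc_lt n); auto; lia.
Qed.

Lemma locate n a : incseq n a -> forall x, 0 <= x < 1 ->
  exists j, (j < n)%nat /\ a j <= x < a (S j).
Proof.
  intros [H0 [Hn Hi]] x Hx.
  assert (forall m, (m <= n)%nat -> a 0%nat <= x < a m -> exists j, (j < m)%nat /\ a j <= x < a (S j)).
  { induction m; intros Hm Hxm; [lra|].
    destruct (Rlt_dec x (a m)).
    - destruct (IHm ltac:(lia) ltac:(lra)) as [j Hj]. exists j; split; [lia| tauto].
    - exists m; split; [lia| lra]. }
  destruct (H n ltac:(lia) ltac:(lra)) as [j Hj]. exists j; auto.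
Qed.

Lemma partition_exists (S0 : list R) : (forall s, In s S0 -> inX s) ->
  exists n a, incseq n a /\ forall s, In s S0 -> exists i, (i < n)%nat /\ a i = s.
Proof.
  induction S0 as [|s S0 IH]; intros HS.
  - exists 1%nat, (fun i => match i with O => 0 | _ => 1 end).
    split; [split; [auto| split; [auto|]]|].
    + intros i Hi. assert (i = O) by lia. subst; lra.
    + intros s [].
  - destruct IH as [n [a [Ha Hmem]]]. { intros; apply HS; simpl; auto. }
    assert (Hs : inX s) by (apply HS; simpl; auto).
    destruct (locate n a Ha s Hs) as [j [Hj Hsj]].
    destruct Ha as [H0 [Hn Hi]].
    destruct (Req_dec (a j) s).
    + exists n, a. split; [split; auto|].
      intros t [<-|Ht]; [exists j; auto| auto].
    + exists (S n), (fun i => if (i <=? j)%nat then a i else if (i =? S j)%nat then s else a (pred i)).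
      split; [split; [|split]|].
      * simpl. auto.
      * destruct (Nat.leb_spec (S n) j); [lia|]. destruct (Nat.eqb_spec (S n) (S j)); [lia|]. simpl; auto.
      * intros i Hi'.
        destruct (Nat.leb_spec i j); destruct (Nat.leb_spec (S i) j);
        destruct (Nat.eqb_spec i (S j)); destruct (Nat.eqb_spec (S i) (S j)); try lia.
        -- apply Hi; lia.
        -- replace i with j by lia. lra.
        -- simpl. replace i with (S j) by lia. lra.
        -- simpl. destruct i; [lia|]. simpl. apply Hi; lia.
      * intros t [<-|Ht].
        -- exists (S j). split; [lia|]. destruct (Nat.leb_spec (S j) j); [lia|]. rewrite Nat.eqb_refl. auto.
        -- destruct (Hmem t Ht) as [i [Hin Hit]].
           destruct (Nat.leb_spec i j).
           ++ exists i. split; [lia|]. destruct (Nat.leb_spec i j); [auto|lia].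
           ++ exists (S i). split; [lia|]. destruct (Nat.leb_spec (S i) j); [lia|].
              destruct (Nat.eqb_spec (S i) (S j)); [lia|]. simpl; auto.
Qed.


Definition len (c d u v : R) := Rmax 0 (Rmin d v - Rmax c u).

Ltac dest_minmax := repeat match goal with
  | |- context[Rmin ?a ?b] => let H := fresh in destruct (Rle_or_lt a b) as [H|H];
      [rewrite (Rmin_left a b H) in * | rewrite (Rmin_right a b (Rlt_le _ _ H)) in *]
  | |- context[Rmax ?a ?b] => let H := fresh in destruct (Rle_or_lt a b) as [H|H];
      [rewrite (Rmax_right a b H) in * | rewrite (Rmax_left a b (Rlt_le _ _ H)) in *]
  | H0 : context[Rmin ?a ?b] |- _ => let H := fresh in destruct (Rle_or_lt a b) as [H|H];
      [rewrite (Rmin_left a b H) in * | rewrite (Rmin_right a b (Rlt_le _ _ H)) in *]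
  | H0 : context[Rmax ?a ?b] |- _ => let H := fresh in destruct (Rle_or_lt a b) as [H|H];
      [rewrite (Rmax_right a b H) in * | rewrite (Rmax_left a b (Rlt_le _ _ H)) in *]
  end.

Lemma len_split c d u e v : c < d -> u <= e <= v -> len c d u v = len c d u e + len c d e v.
Proof. intros. unfold len. dest_minmax; lra. Qed.

Section SumLen.
Variables (n : nat) (c d : nat -> R).
Hypothesis hcd : forall k, (k < n)%nat -> c k < d k.
Hypothesis hdisj : forall j k t, (j < n)%nat -> (k < n)%nat -> j <> k ->
  c j < t < d j -> c k < t < d k -> False.

Lemma sum_len (E : list R) : forall u v, u < v ->
  (forall t, u < t < v -> In t E \/ exists k, (k < n)%nat /\ c k < t < d k) ->
  sumf (fun k => len (c k) (d k) u v) n = v - u.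
Proof.
  induction E as [|e E IH]; intros u v Huv Hcov.
  - destruct (Hcov ((u+v)/2) ltac:(lra)) as [[]|[k [Hk Hck]]].
    assert (Hc : c k <= u).
    { destruct (Rle_dec (c k) u); auto. exfalso.
      destruct (Hcov (c k) ltac:(lra)) as [[]|[j [Hj Hcj]]].
      destruct (Nat.eq_dec j k). { subst; lra. }
      apply (hdisj j k ((c k + Rmin (d j) (d k))/2)); auto;
      dest_minmax; lra. }
    assert (Hd : v <= d k).
    { destruct (Rle_dec v (d k)); auto. exfalso.
      destruct (Hcov (d k) ltac:(lra)) as [[]|[j [Hj Hcj]]].
      destruct (Nat.eq_dec j k). { subst; lra. }
      apply (hdisj j k ((d k + Rmax (c j) (c k))/2)); auto;
      dest_minmax; lra. }
    rewrite (sumf_single _ n k); auto.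
    + unfold len. dest_minmax; lra.
    + intros j Hj Hjk. unfold len.
      destruct (Rle_dec (Rmin (d j) v - Rmax (c j) u) 0).
      * apply Rmax_left; auto.
      * exfalso. pose proof (hcd j Hj).
        apply (hdisj j k ((Rmin (d j) v + Rmax (c j) u)/2)); auto;
        revert n0; dest_minmax; lra.
  - destruct (Rlt_dec u e); [destruct (Rlt_dec e v)|].
    + rewrite (sumf_ext _ (fun k => len (c k) (d k) u e + len (c k) (d k) e v)).
      2:{ intros k Hk. apply len_split; [apply hcd; auto| lra]. }
      rewrite sumf_plus. rewrite (IH u e), (IH e v); try lra.
      * intros t Ht. destruct (Hcov t ltac:(lra)) as [[H|H]|H]; auto. lra.
      * intros t Ht. destruct (Hcov t ltac:(lra)) as [[H|H]|H]; auto. lra.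
    + apply IH; auto. intros t Ht. destruct (Hcov t Ht) as [[H|H]|H]; auto. lra.
    + apply IH; auto. intros t Ht. destruct (Hcov t Ht) as [[H|H]|H]; auto. lra.
Qed.
End SumLen.


Section Piece.
Variables (h : R -> R) (al be : R).
Hypothesis Hinto : forall x, inX x -> inX (h x).
Hypothesis Hinj : forall x y, inX x -> inX y -> h x = h y -> x = y.
Hypothesis Hab : 0 <= al < be.
Hypothesis Hb1 : be <= 1.
Hypothesis Hc : forall x, al < x < be -> contX_at h x.

Lemma ivt_h x1 x2 y : al < x1 -> x1 <= x2 -> x2 < be -> (h x1 - y) * (h x2 - y) <= 0 ->
  exists t, x1 <= t <= x2 /\ h t = y.
Proof.
  intros H1 H12 H2 Hs.
  set (cl := fun t => Rmax x1 (Rmin t x2)).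
  assert (Hcl : forall t, x1 <= cl t <= x2).
  { intros t; unfold cl; dest_minmax; lra. }
  assert (Hlip : forall t t0, Rabs (cl t - cl t0) <= Rabs (t - t0)).
  { intros t t0. unfold cl. dest_minmax; unfold Rabs; repeat destruct Rcase_abs; lra. }
  destruct (IVT_cor (fun t => h (cl t) - y) x1 x2) as [z [Hz Hhz]]; auto.
  - intros t0. apply cont_of_ed. intros eps Heps.
    pose proof (Hcl t0).
    destruct (Hc (cl t0) ltac:(lra) eps Heps) as [del [Hdel Hd]].
    exists del; split; auto. intros t Ht.
    replace (h (cl t) - y - (h (cl t0) - y)) with (h (cl t) - h (cl t0)) by ring.
    apply Hd.
    + pose proof (Hcl t). unfold inX; lra.
    + pose proof (Hlip t t0). lra.
  - assert (cl x1 = x1) by (unfold cl; dest_minmax; lra).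
    assert (cl x2 = x2) by (unfold cl; dest_minmax; lra).
    rewrite H, H0. auto.
  - exists z. split; auto. assert (cl z = z) by (unfold cl; dest_minmax; lra).
    rewrite H in Hhz. lra.
Qed.

Lemma inP x : al < x < be -> inX x.
Proof. unfold inX; lra. Qed.

Lemma btw3 p q r : al < p -> p < q -> q < r -> r < be ->
  (h p < h q /\ h q < h r) \/ (h q < h p /\ h r < h q).
Proof.
  intros H1 H2 H3 H4.
  assert (hpq : h p <> h q). { intro E. apply Hinj in E; [lra| apply inP; lra| apply inP; lra]. }
  assert (hqr : h q <> h r). { intro E. apply Hinj in E; [lra| apply inP; lra| apply inP; lra]. }
  assert (hpr : h p <> h r). { intro E. apply Hinj in E; [lra| apply inP; lra| apply inP; lra]. }
  destruct (Rlt_dec (h p) (h r)).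
  - left. destruct (Rlt_dec (h r) (h q)).
    + exfalso. destruct (ivt_h p q (h r)) as [t [Ht Et]]; try lra.
      { nra. }
      apply Hinj in Et; [lra| apply inP; lra| apply inP; lra].
    + destruct (Rlt_dec (h q) (h p)).
      * exfalso. destruct (ivt_h q r (h p)) as [t [Ht Et]]; try lra.
        { nra. }
        apply Hinj in Et; [lra| apply inP; lra| apply inP; lra].
      * lra.
  - right. destruct (Rlt_dec (h q) (h r)).
    + exfalso. destruct (ivt_h p q (h r)) as [t [Ht Et]]; try lra.
      { nra. }
      apply Hinj in Et; [lra| apply inP; lra| apply inP; lra].
    + destruct (Rlt_dec (h p) (h q)).
      * exfalso. destruct (ivt_h q r (h p)) as [t [Ht Et]]; try lra.
        { nra. }
        apply Hinj in Et; [lra| apply inP; lra| apply inP; lra].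
      * lra.
Qed.

Lemma mono_piece :
  (forall x y, al < x < be -> al < y < be -> x < y -> h x < h y) \/
  (forall x y, al < x < be -> al < y < be -> x < y -> h y < h x).
Proof.
  destruct (classic (forall x y, al < x < be -> al < y < be -> x < y -> h x < h y)) as [H|H];
    [left; auto| right].
  assert (exists x0 y0, al < x0 < be /\ al < y0 < be /\ x0 < y0 /\ h y0 < h x0) as [x0 [y0 [Hx0 [Hy0 [Hxy0 Hh0]]]]].
  { apply NNPP. intro N. apply H. intros x y Hx Hy Hxy.
    destruct (Rlt_dec (h x) (h y)); auto. exfalso. apply N. exists x, y.
    repeat split; try lra.
    assert (h x <> h y). { intro E. apply Hinj in E; [lra| apply inP; lra| apply inP; lra]. }
    lra. }
  intros x y Hx Hy Hxy.
  set (z := (Rmax y y0 + be)/2).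
  assert (Hz : y < z /\ y0 < z /\ z < be) by (unfold z; dest_minmax; lra).
  set (m := Rmax x x0).
  assert (Hm : x <= m /\ x0 <= m /\ m < z /\ (m = x \/ m = x0)) by (unfold m; dest_minmax; lra).
  assert (A1 : h z < h x0).
  { destruct (btw3 x0 y0 z) as [B|B]; lra. }
  assert (A2 : h z < h m).
  { destruct (Req_dec x0 m). { rewrite <- H0; auto. }
    destruct (btw3 x0 m z) as [B|B]; lra. }
  assert (A3 : h z < h x).
  { destruct (Req_dec x m). { rewrite H0; auto. }
    destruct (btw3 x m z) as [B|B]; lra. }
  destruct (btw3 x y z) as [B|B]; lra.
Qed.

Lemma piece : exists c d (s : bool), c < d /\ 0 <= c /\ d <= 1 /\
  (forall x, al < x < be -> c < h x < d) /\
  (forall y, c < y < d -> exists x, al < x < be /\ h x = y) /\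
  (s = true -> forall x y, al < x < be -> al < y < be -> x < y -> h x < h y) /\
  (s = false -> forall x y, al < x < be -> al < y < be -> x < y -> h y < h x).
Proof.
  set (Eu := fun y => exists x, al < x < be /\ y = h x).
  set (El := fun y => exists x, al < x < be /\ y = - h x).
  assert (Hmid : al < (al + be)/2 < be) by lra.
  destruct (completeness Eu) as [d [Hd1 Hd2]].
  { exists 1. intros y [x [Hx ->]]. pose proof (Hinto x (inP x Hx)). unfold inX in *; lra. }
  { exists (h ((al+be)/2)). exists ((al+be)/2). auto. }
  destruct (completeness El) as [mc [Hc1 Hc2]].
  { exists 0. intros y [x [Hx ->]]. pose proof (Hinto x (inP x Hx)). unfold inX in *; lra. }
  { exists (- h ((al+be)/2)). exists ((al+be)/2). auto. }
  assert (Hle : forall x, al < x < be -> - mc <= h x <= d).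
  { intros x Hx. split.
    - assert (El (- h x)) by (exists x; auto). specialize (Hc1 _ H). lra.
    - apply Hd1. exists x; auto. }
  assert (Hbig : forall x, al < x < be -> exists x', al < x' < be /\ h x < h x').
  { intros x Hx. destruct mono_piece as [M|M].
    - exists ((x + be)/2). split; [lra|]. apply M; lra.
    - exists ((al + x)/2). split; [lra|]. apply M; lra. }
  assert (Hsmall : forall x, al < x < be -> exists x', al < x' < be /\ h x' < h x).
  { intros x Hx. destruct mono_piece as [M|M].
    - exists ((al + x)/2). split; [lra|]. apply M; lra.
    - exists ((x + be)/2). split; [lra|]. apply M; lra. }
  assert (Hstrict : forall x, al < x < be -> - mc < h x < d).
  { intros x Hx. destruct (Hbig x Hx) as [x1 [Hx1 H1]]. destruct (Hsmall x Hx) as [x2 [Hx2 H2]].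
    pose proof (Hle x1 Hx1). pose proof (Hle x2 Hx2). lra. }
  assert (Hon : forall y, - mc < y < d -> exists x, al < x < be /\ h x = y).
  { intros y Hy.
    assert (exists x2, al < x2 < be /\ y < h x2) as [x2 [Hx2 H2]].
    { apply NNPP. intro N. assert (d <= y); [|lra]. apply Hd2. intros z [x [Hx ->]].
      destruct (Rle_dec (h x) y); auto. exfalso. apply N. exists x. split; auto. lra. }
    assert (exists x1, al < x1 < be /\ h x1 < y) as [x1 [Hx1 H1]].
    { apply NNPP. intro N. assert (mc <= - y); [|lra]. apply Hc2. intros z [x [Hx ->]].
      destruct (Rle_dec y (h x)); [lra|]. exfalso. apply N. exists x. split; auto. lra. }
    destruct (Rle_dec x1 x2).
    - destruct (ivt_h x1 x2 y) as [t [Ht Et]]; try lra.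
      { nra. }
      exists t. split; auto; lra.
    - destruct (ivt_h x2 x1 y) as [t [Ht Et]]; try lra.
      { nra. }
      exists t. split; auto; lra. }
  exists (- mc), d.
  assert (Hcd : - mc < d). { specialize (Hstrict _ Hmid). lra. }
  assert (H0c : 0 <= - mc).
  { destruct (Rle_dec 0 (- mc)); auto. exfalso.
    destruct (Hon ((- mc + Rmin 0 d)/2)) as [x [Hx Ex]]. { dest_minmax; lra. }
    pose proof (Hinto x (inP x Hx)). unfold inX in *. revert Ex; dest_minmax; lra. }
  assert (Hd1' : d <= 1).
  { destruct (Rle_dec d 1); auto. exfalso.
    destruct (Hon ((d + Rmax 1 (- mc))/2)) as [x [Hx Ex]]. { dest_minmax; lra. }
    pose proof (Hinto x (inP x Hx)). unfold inX in *. revert Ex; dest_minmax; lra. }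
  destruct mono_piece as [M|M].
  - exists true. repeat split; auto; try lra; try (apply Hstrict; auto).
    all: intros; discriminate.
  - exists false. repeat split; auto; try lra; try (apply Hstrict; auto).
    all: intros; discriminate.
Qed.
End Piece.


Definition CMH (u v p q : R) (r : R -> R) (s : bool) : Prop :=
  u < v /\ p < q /\
  (forall x, u < x < v -> p < r x < q) /\
  (forall y, p < y < q -> exists x, u < x < v /\ r x = y) /\
  (s = true -> forall x y, u < x < v -> u < y < v -> x < y -> r x < r y) /\
  (s = false -> forall x y, u < x < v -> u < y < v -> x < y -> r y < r x).

Lemma sum_cm_homeo n (U V P Q : nat -> R) (r : nat -> R -> R) (s : nat -> bool) :
  (forall k, (k < n)%nat -> 0 <= U k /\ V k <= 1 /\ CMH (U k) (V k) (P k) (Q k) (r k) (s k)) ->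
  sumf (fun k => Q k - P k) n = 1 ->
  (forall x y, 0 <= x -> x < y -> y <= 1 -> exists k, (k < n)%nat /\ x < V k /\ U k < y) ->
  let Phi := fun x => sumf (fun k => cm (U k) (V k) (P k) (Q k) (r k) (s k) x) n in
  incr_homeoX Phi /\ Phi 0 = 0 /\ Phi 1 = 1 /\ (forall x y, x <= y -> Phi x <= Phi y) /\
  (forall x y, 0 <= x -> x < y -> y <= 1 -> Phi x < Phi y).
Proof.
  intros HK Hsum Hcov Phi.
  assert (P0 : Phi 0 = 0).
  { unfold Phi. transitivity (sumf (fun _ => 0) n).
    - apply sumf_ext. intros k Hk. apply cm_lo. apply HK; auto.
    - clear; induction n; simpl; lra. }
  assert (P1 : Phi 1 = 1).
  { unfold Phi. rewrite <- Hsum. apply sumf_ext. intros k Hk.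
    destruct (HK k Hk) as [_ [H1 [H2 [H3 _]]]]. apply cm_hi; auto; lra. }
  assert (Pm : forall x y, x <= y -> Phi x <= Phi y).
  { intros x y Hxy. unfold Phi. apply sumf_le. intros k Hk.
    destruct (HK k Hk) as [_ [_ [H1 [H2 [H3 [H4 [H5 H6]]]]]]]. apply cm_le; auto. }
  assert (Ps : forall x y, 0 <= x -> x < y -> y <= 1 -> Phi x < Phi y).
  { intros x y H0 Hxy H1. destruct (Hcov x y H0 Hxy H1) as [j [Hj [Hj1 Hj2]]].
    unfold Phi. apply (sumf_lt _ _ n j); auto.
    - intros k Hk. destruct (HK k Hk) as [_ [_ [K1 [K2 [K3 [K4 [K5 K6]]]]]]]. apply cm_le; auto; lra.
    - destruct (HK j Hj) as [_ [_ [K1 [K2 [K3 [K4 [K5 K6]]]]]]]. apply cm_lt; auto. }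
  assert (Pc : forall x0, continuity_pt Phi x0).
  { intros x0. unfold Phi. apply (sumf_cont (fun k => cm (U k) (V k) (P k) (Q k) (r k) (s k))).
    intros k Hk. destruct (HK k Hk) as [_ [_ [K1 [K2 [K3 [K4 [K5 K6]]]]]]]. apply cm_cont; auto. }
  split; [|split; [auto| split; [auto| split; auto]]].
  apply homeo_of_incr.
  - intros x [Hx0 Hx1]. split.
    + rewrite <- P0. apply Pm; auto.
    + rewrite <- P1. apply Ps; lra.
  - intros x y [Hx0 Hx1] [Hy0 Hy1] Hxy. apply Ps; lra.
  - intros y [Hy0 Hy1].
    destruct (IVT_cor (fun t => Phi t - y) 0 1) as [z [Hz Ez]].
    + intros t. apply (continuity_pt_minus Phi (fun _ => y)); auto.
      apply continuity_pt_const. intros ? ?; auto.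
    + lra.
    + rewrite P0, P1. nra.
    + exists z. destruct (Req_dec z 1).
      * subst. rewrite P1 in Ez. lra.
      * split; [unfold inX; lra| lra].
Qed.


Definition PP (h : R -> R) (al be c d : R) (s : bool) : Prop :=
  c < d /\ 0 <= c /\ d <= 1 /\
  (forall x, al < x < be -> c < h x < d) /\
  (forall y, c < y < d -> exists x, al < x < be /\ h x = y) /\
  (s = true -> forall x y, al < x < be -> al < y < be -> x < y -> h x < h y) /\
  (s = false -> forall x y, al < x < be -> al < y < be -> x < y -> h y < h x).

Theorem proposition2p5 (h : R -> R) :
  PC_hat h ->
  exists (phi psi f g : R -> R),
    incr_homeoX phi /\ incr_homeoX psi /\ IET_hat f /\ IET_hat g /\
    (forall x, inX x -> h x = psi (f x)) /\
    (forall x, inX x -> h x = g (phi x)).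
Proof.
  intros [Hbij [S0 [HS Hcont]]].
  pose proof Hbij as [Hinto [Hinj Hsurj]].
  destruct (partition_exists S0 HS) as [n [a [Ha Hmem]]].
  pose proof Ha as [Ha0 [Han Hai]].
  assert (Halt : forall i j, (i < j)%nat -> (j <= n)%nat -> a i < a j) by (apply inc_lt; auto).
  assert (Hale : forall i j, (i <= j)%nat -> (j <= n)%nat -> a i <= a j) by (apply inc_le; auto).
  assert (Ha01 : forall i, (i <= n)%nat -> 0 <= a i <= 1).
  { intros i Hi. rewrite <- Ha0, <- Han. split; apply Hale; lia. }
  assert (HcP : forall k, (k < n)%nat -> forall x, a k < x < a (S k) -> contX_at h x).
  { intros k Hk x Hx. pose proof (Ha01 k ltac:(lia)). pose proof (Ha01 (S k) ltac:(lia)).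
    apply Hcont; [unfold inX; lra|]. intros HIn.
    destruct (Hmem x HIn) as [i [Hi Ei]].
    destruct (le_lt_dec i k).
    - pose proof (Hale i k ltac:(lia) ltac:(lia)). lra.
    - pose proof (Hale (S k) i ltac:(lia) ltac:(lia)). lra. }
  assert (HP : forall k, exists t : R * R * bool, (k < n)%nat ->
     PP h (a k) (a (S k)) (fst (fst t)) (snd (fst t)) (snd t)).
  { intros k. destruct (lt_dec k n) as [Hk|Hk].
    - pose proof (Ha01 k ltac:(lia)). pose proof (Ha01 (S k) ltac:(lia)).
      destruct (piece h (a k) (a (S k)) Hinto Hinj) as [c [d [s Hs]]]; auto.
      { split; [lra| apply Hai; auto]. }
      { lra. }
      { apply HcP; auto. }
      exists (c, d, s). intros _. exact Hs.
    - exists (0, 0, true). intros; lia. }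
  set (F := fun k => proj1_sig (constructive_indefinite_description _ (HP k))).
  set (c := fun k => fst (fst (F k))).
  set (d := fun k => snd (fst (F k))).
  set (sg := fun k => snd (F k)).
  assert (HPk : forall k, (k < n)%nat -> PP h (a k) (a (S k)) (c k) (d k) (sg k)).
  { intros k Hk. unfold c, d, sg, F. destruct constructive_indefinite_description as [t Ht].
    simpl. auto. }
  clearbody c d sg. clear F HP.
  assert (Hdisj : forall j k t, (j < n)%nat -> (k < n)%nat -> j <> k ->
     c j < t < d j -> c k < t < d k -> False).
  { intros j k t Hj Hk Hjk Htj Htk.
    destruct (HPk j Hj) as [_ [_ [_ [_ [Oj _]]]]]. destruct (HPk k Hk) as [_ [_ [_ [_ [Ok _]]]]].
    destruct (Oj t Htj) as [x [Hx Ex]]. destruct (Ok t Htk) as [x' [Hx' Ex']].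
    pose proof (Ha01 j ltac:(lia)). pose proof (Ha01 (S j) ltac:(lia)).
    pose proof (Ha01 k ltac:(lia)). pose proof (Ha01 (S k) ltac:(lia)).
    assert (x = x') by (apply Hinj; [unfold inX; lra| unfold inX; lra| congruence]).
    subst x'. destruct (le_lt_dec j k).
    - pose proof (Hale (S j) k ltac:(lia) ltac:(lia)). lra.
    - pose proof (Hale (S k) j ltac:(lia) ltac:(lia)). lra. }
  assert (Hsep : forall j k, (j < n)%nat -> (k < n)%nat -> j <> k -> d j <= c k \/ d k <= c j).
  { intros j k Hj Hk Hjk. destruct (Rle_dec (d j) (c k)); [auto|].
    destruct (Rle_dec (d k) (c j)); [auto|]. exfalso.
    destruct (HPk j Hj) as [Cj _]. destruct (HPk k Hk) as [Ck _].
    apply (Hdisj j k ((Rmax (c j) (c k) + Rmin (d j) (d k))/2)); auto;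
      dest_minmax; lra. }
  set (E := map (fun i => h (a i)) (seq 0 n)).
  assert (Hcov : forall t, inX t -> In t E \/ exists k, (k < n)%nat /\ c k < t < d k).
  { intros t Ht. destruct (Hsurj t Ht) as [x [Hx Ex]].
    destruct (locate n a Ha x Hx) as [j [Hj Hxj]].
    destruct (Req_dec (a j) x).
    - left. unfold E. apply in_map_iff. exists j. split; [congruence|].
      apply in_seq. lia.
    - right. exists j. split; auto. destruct (HPk j Hj) as [_ [_ [_ [I _]]]].
      rewrite <- Ex. apply I. lra. }
  assert (Hsum1 : sumf (fun k => d k - c k) n = 1).
  { replace 1 with (1 - 0) by lra.
    rewrite <- (sum_len n c d) with (E := E) (u := 0) (v := 1).
    - apply sumf_ext. intros k Hk. destruct (HPk k Hk) as [C1 [C2 [C3 _]]].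
      unfold len. dest_minmax; lra.
    - intros k Hk. apply HPk; auto.
    - auto.
    - lra.
    - intros t Ht. apply Hcov. unfold inX; lra. }
  assert (Hg : forall y, exists x, inX y -> inX x /\ h x = y).
  { intros y. destruct (classic (inX y)) as [H|H].
    - destruct (Hsurj y H) as [x Hx]. exists x; auto.
    - exists 0. intros; contradiction. }
  set (hinv := fun y => proj1_sig (constructive_indefinite_description _ (Hg y))).
  assert (Hhinv : forall y, inX y -> inX (hinv y) /\ h (hinv y) = y).
  { intros y Hy. unfold hinv. destruct constructive_indefinite_description as [x Hx]. simpl. auto. }
  clearbody hinv.
  assert (Hhinvh : forall x, inX x -> hinv (h x) = x).
  { intros x Hx. destruct (Hhinv (h x) (Hinto x Hx)). apply Hinj; auto. }
  assert (HhinvJ : forall k, (k < n)%nat -> forall y, c k < y < d k ->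
      a k < hinv y < a (S k) /\ h (hinv y) = y).
  { intros k Hk y Hy. destruct (HPk k Hk) as [_ [_ [_ [_ [O _]]]]].
    destruct (O y Hy) as [x [Hx Ex]].
    pose proof (Ha01 k ltac:(lia)). pose proof (Ha01 (S k) ltac:(lia)).
    subst y. rewrite Hhinvh; [auto| unfold inX; lra]. }
  destruct (sum_cm_homeo n a (fun k => a (S k)) c d (fun _ => h) sg) as
      [Phom [Ph0 [Ph1 [Phm Phs]]]].
  { intros k Hk. pose proof (Ha01 k ltac:(lia)). pose proof (Ha01 (S k) ltac:(lia)).
    destruct (HPk k Hk) as [C1 [C2 [C3 [C4 [C5 [C6 C7]]]]]].
    split; [lra| split; [lra|]]. split; [apply Hai; auto|]. split; [auto|].
    split; [auto| split; [auto| split; auto]]. }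
  { auto. }
  { intros x y Hx0 Hxy Hy1. destruct (locate n a Ha x ltac:(lra)) as [k [Hk Hxk]].
    exists k. split; [auto| lra]. }
  set (phi := fun x => sumf (fun k => cm (a k) (a (S k)) (c k) (d k) h (sg k) x) n) in *.
  change (phi 0 = 0) in Ph0. change (phi 1 = 1) in Ph1.
  change (forall x y, x <= y -> phi x <= phi y) in Phm.
  change (forall x y, 0 <= x -> x < y -> y <= 1 -> phi x < phi y) in Phs.
  destruct (sum_cm_homeo n c d a (fun k => a (S k)) (fun _ => hinv) sg) as
      [Thom [Th0 [Th1 [Thm Ths]]]].
  { intros k Hk. pose proof (Ha01 k ltac:(lia)). pose proof (Ha01 (S k) ltac:(lia)).
    destruct (HPk k Hk) as [C1 [C2 [C3 [C4 [C5 [C6 C7]]]]]].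
    split; [lra| split; [lra|]]. split; [auto|]. split; [apply Hai; auto|].
    split.
    { intros y Hy. apply HhinvJ; auto. }
    split.
    { intros x Hx. exists (h x). split; [apply C4; auto|]. apply Hhinvh. unfold inX; lra. }
    split.
    - intros Hs y y' Hy Hy' Hyy'. destruct (HhinvJ k Hk y Hy) as [B1 B2].
      destruct (HhinvJ k Hk y' Hy') as [B3 B4].
      destruct (Rtotal_order (hinv y) (hinv y')) as [L|[L|L]]; auto.
      + rewrite <- B2, <- B4, L in Hyy'. lra.
      + specialize (C6 Hs _ _ B3 B1 L). lra.
    - intros Hs y y' Hy Hy' Hyy'. destruct (HhinvJ k Hk y Hy) as [B1 B2].
      destruct (HhinvJ k Hk y' Hy') as [B3 B4].
      destruct (Rtotal_order (hinv y) (hinv y')) as [L|[L|L]]; auto.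
      + specialize (C7 Hs _ _ B1 B3 L). lra.
      + rewrite <- B2, <- B4, L in Hyy'. lra. }
  { rewrite sumf_tele. lra. }
  { intros x y Hx0 Hxy Hy1. destruct (avoid E x y Hxy) as [t [Ht HtE]].
    destruct (Hcov t ltac:(unfold inX; lra)) as [H|[k [Hk Hck]]]; [contradiction|].
    exists k. split; [auto| lra]. }
  set (theta := fun x => sumf (fun k => cm (c k) (d k) (a k) (a (S k)) hinv (sg k) x) n) in *.
  change (theta 0 = 0) in Th0. change (theta 1 = 1) in Th1.
  change (forall x y, x <= y -> theta x <= theta y) in Thm.
  change (forall x y, 0 <= x -> x < y -> y <= 1 -> theta x < theta y) in Ths.
  destruct (incr_homeo_inv phi Phom) as [phiinv [Pihom Piinv]].
  destruct (incr_homeo_inv theta Thom) as [thinv [Tihom Tiinv]].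
  exists phi, thinv, (fun x => theta (h x)), (fun y => h (phiinv y)).
  split; [auto| split; [auto| split; [| split; [| split]]]].
  -
    split. { apply bij_comp; [apply Thom| auto]. }
    exists n, a. split; [auto| split; [auto|]]. split; [auto|].
    intros k Hk.
    pose proof (Ha01 k ltac:(lia)). pose proof (Ha01 (S k) ltac:(lia)).
    pose proof (Hai k Hk).
    destruct (HPk k Hk) as [C1 [C2 [C3 [C4 [C5 [C6 C7]]]]]].
    set (m := (a k + a (S k))/2).
    set (nk := cm (c k) (d k) (a k) (a (S k)) hinv (sg k)).
    assert (Hkey : forall x, a k < x < a (S k) -> theta (h x) = theta (h m) - nk (h m) + nk (h x)).
    { intros x Hx.
      assert (theta (h x) - theta (h m) = nk (h x) - nk (h m)); [|lra].
      unfold theta, nk.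
      apply (sumf_diff (fun j => cm (c j) (d j) (a j) (a (S j)) hinv (sg j) (h x))
                       (fun j => cm (c j) (d j) (a j) (a (S j)) hinv (sg j) (h m)) n k); auto.
      intros j Hj Hjk. destruct (HPk j Hj) as [D1 _].
      pose proof (Hai j Hj).
      pose proof (C4 x Hx). pose proof (C4 m ltac:(unfold m; lra)).
      destruct (Hsep j k Hj Hk Hjk).
      - rewrite !(cm_hi (c j) (d j) (a j) (a (S j))); auto; lra.
      - rewrite !(cm_lo (c j) (d j) (a j) (a (S j))); auto; lra. }
    assert (Hnk : forall x, a k < x < a (S k) -> nk (h x) = if sg k then x - a k else a (S k) - x).
    { intros x Hx. unfold nk. rewrite cm_mid by (apply C4; auto).
      rewrite Hhinvh by (unfold inX; lra). auto. }
    destruct (sg k) eqn:Esg.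
    + exists (theta (h m) - nk (h m) - a k). left. intros x Hx.
      rewrite (Hkey x Hx), (Hnk x Hx). rewrite ?Esg. lra.
    + exists (theta (h m) - nk (h m) + a (S k)). right. intros x Hx.
      rewrite (Hkey x Hx), (Hnk x Hx). rewrite ?Esg. lra.
  -
    split. { apply bij_comp; [auto| apply Pihom]. }
    exists n, (fun i => phi (a i)).
    split. { rewrite Ha0; auto. }
    split. { rewrite Han; auto. }
    split.
    { intros i Hi. pose proof (Ha01 i ltac:(lia)). pose proof (Ha01 (S i) ltac:(lia)).
      pose proof (Hai i Hi). apply Phs; lra. }
    intros k Hk.
    pose proof (Ha01 k ltac:(lia)). pose proof (Ha01 (S k) ltac:(lia)).
    pose proof (Hai k Hk).
    destruct (HPk k Hk) as [C1 [C2 [C3 [C4 [C5 [C6 C7]]]]]].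
    set (mk := cm (a k) (a (S k)) (c k) (d k) h (sg k)).
    assert (Hkey : forall y, phi (a k) < y < phi (a (S k)) ->
       a k < phiinv y < a (S k) /\ y = phi (a k) + mk (phiinv y)).
    { intros y Hy.
      assert (Hy0 : inX y).
      { pose proof (Phm 0 (a k) ltac:(lra)). pose proof (Phm (a (S k)) 1 ltac:(lra)).
        unfold inX; lra. }
      destruct (Piinv y Hy0) as [Hx [_ Ex]].
      set (x := phiinv y) in *.
      assert (Hxk : a k < x < a (S k)).
      { split.
        - destruct (Rlt_dec (a k) x); auto. pose proof (Phm x (a k) ltac:(lra)). lra.
        - destruct (Rlt_dec x (a (S k))); auto. pose proof (Phm (a (S k)) x ltac:(lra)). lra. }
      split; auto.
      assert (phi x - phi (a k) = mk x - mk (a k)).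
      { unfold phi, mk.
        apply (sumf_diff (fun j => cm (a j) (a (S j)) (c j) (d j) h (sg j) x)
                         (fun j => cm (a j) (a (S j)) (c j) (d j) h (sg j) (a k)) n k); auto.
        intros j Hj Hjk. destruct (HPk j Hj) as [D1 _]. pose proof (Hai j Hj).
        destruct (le_lt_dec j k).
        - pose proof (Hale (S j) k ltac:(lia) ltac:(lia)).
          rewrite !(cm_hi (a j) (a (S j)) (c j) (d j)); auto; lra.
        - pose proof (Hale (S k) j ltac:(lia) ltac:(lia)).
          rewrite !(cm_lo (a j) (a (S j)) (c j) (d j)); auto; lra. }
      assert (mk (a k) = 0) by (unfold mk; apply cm_lo; lra).
      lra. }
    destruct (sg k) eqn:Esg.
    + exists (c k - phi (a k)). left. intros y Hy.
      destruct (Hkey y Hy) as [Hx Ey]. unfold mk in Ey. rewrite cm_mid in Ey by auto.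
      rewrite ?Esg in Ey. lra.
    + exists (d k + phi (a k)). right. intros y Hy.
      destruct (Hkey y Hy) as [Hx Ey]. unfold mk in Ey. rewrite cm_mid in Ey by auto.
      rewrite ?Esg in Ey. lra.
  - intros x Hx. destruct (Tiinv (h x) (Hinto x Hx)) as [_ [E1 _]]. rewrite E1. auto.
  - intros x Hx. destruct (Piinv x Hx) as [_ [E1 _]]. rewrite E1. auto.
Qed.
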